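(* Let $a_1,a_2>0$, $e_1,e_2\in[0,1)$, and let $K,L,M,N$ be the real numbers defined in the context. For $u_2\in\mathbb{R}$ define \[ \begin{split} \lambda &= a_1e_1^2,\\ \mu &= a_2\sqrt{1-e_1^2}\Bigl(\sqrt{1-e_2^2}\,N\sin u_2 + L\cos u_2 - e_2 L\Bigr),\\ \nu &= a_2e_2K - a_1e_1 - a_2\sqrt{1-e_2^2}\,M\sin u_2 - a_2K\cos u_2,\\ \alpha &= a_1\Bigl(\sqrt{1-e_2^2}\,M\cos u_2 - K\sin u_2\Bigr),\\ \beta &= a_1\sqrt{1-e_1^2}\Bigl(\sqrt{1-e_2^2}\,N\cos u_2 - L\sin u_2\Bigr),\\ \gamma &= a_2e_2^2\sin u_2\cos u_2 - a_1e_1\sqrt{1-e_2^2}\,M\cos u_2 + (a_1e_1K - a_2e_2)\sin u_2, \end{split} \] and let \[ \mathscr{S}(u_2) = \begin{pmatrix} \alpha^2+\beta^2 & 0 & -\alpha\lambda & 0\\ 2\alpha\gamma & \alpha^2+\beta^2 & \beta\mu - \lambda\gamma-\alpha\nu & -\alpha\lambda\\ \gamma^2-\beta^2 & 2\alpha\gamma & -\gamma\nu & \beta\mu-\lambda\gamma-\alpha\nu\\ 0 &\gamma^2-\beta^2 & 0 &-\gamma\nu \end{pmatrix} \] (the Sylvester matrix, with respect to $\cos u_1$, of the two polynomials $(\alpha^2+\beta^2)\cos^2 u_1 + 2\alpha\gamma\cos u_1 + \gamma^2-\beta^2$ and $- \alpha\lambda\cos^2 u_1 + (\beta\mu - \lambda\gamma-\alpha\nu)\cos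 u_1 -\gamma\nu$). Then $\det\mathscr{S}(u_2)$ contains the factor $\beta^2$: there is a polynomial $P$ in $\alpha,\beta,\gamma,\lambda,\mu,\nu$ (hence a trigonometric polynomial $g(u_2)$ in $\cos u_2,\sin u_2$) such that $\det\mathscr{S}(u_2)=\beta(u_2)^2\, g(u_2)$ for all $u_2$.
   Context: Two confocal elliptic orbits $\mathcal{E}_1,\mathcal{E}_2$ are given by Keplerian elements $a_i$ (semimajor axis), $e_i$ (eccentricity), $i_i$ (inclination), $\Omega_i$ (longitude of node), $\omega_i$ (argument of pericenter), $i=1,2$. Define the unit vectors $\mathcal{P}=(\cos\omega_1\cos\Omega_1-\cos i_1\sin\omega_1\sin\Omega_1,\ \cos\omega_1\sin\Omega_1+\cos i_1\sin\omega_1\cos\Omega_1,\ \sin\omega_1\sin i_1)$, $\mathcal{Q}=(-\sin\omega_1\cos\Omega_1-\cos i_1\cos\omega_1\sin\Omega_1,\ -\sin\omega_1\sin\Omega_1+\cos i_1\cos\omega_1\cos\Omega_1,\ \cos\omega_1\sin i_1)$, and $\mathfrak{p},\mathfrak{q}$ by the same formulas with $(i_2,\Omega_2,\omega_2)$ in place of $(i_1,\Omega_1,\omega_1)$. Set $K=\langle\mathcal{P},\mathfrak{p}\rangle$, $L=\langle\mathcal{Q},\mathfrak{p}\rangle$, $M=\langle\mathcal{P},\mathfrak{q}\rangle$, $N=\langle\mathcal{Q},\mathfrak{q}\rangle$. Here $u_1,u_2$ are the eccentric anomalies on the two orbits. *)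

(* Defs.v *)
From HB Require Import structures.
From mathcomp Require Import all_boot all_algebra.
From mathcomp Require Import Rstruct.
From mathcomp Require Import mpoly.
From Stdlib Require Import Reals.

Set Implicit Arguments.
Unset Strict Implicit.
Unset Printing Implicit Defensive.
Import GRing.Theory.
Local Open Scope ring_scope.

(* Unit vectors P, Q of an orbit with angles (i, Om, om) *)
Definition vecP (i Om om : R) : R * R * R :=
  (cos om * cos Om - cos i * sin om * sin Om,
   cos om * sin Om + cos i * sin om * cos Om,
   sin om * sin i).
Definition vecQ (i Om om : R) : R * R * R :=
  (- sin om * cos Om - cos i * cos om * sin Om,
   - sin om * sin Om + cos i * cos om * cos Om,
   cos om * sin i).
Definition dot3 (x y : R * R * R) : R :=
  x.1.1 * y.1.1 + x.1.2 * y.1.2 + x.2 * y.2.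

Definition Kc i1 O1 w1 i2 O2 w2 := dot3 (vecP i1 O1 w1) (vecP i2 O2 w2).
Definition Lc i1 O1 w1 i2 O2 w2 := dot3 (vecQ i1 O1 w1) (vecP i2 O2 w2).
Definition Mc i1 O1 w1 i2 O2 w2 := dot3 (vecP i1 O1 w1) (vecQ i2 O2 w2).
Definition Nc i1 O1 w1 i2 O2 w2 := dot3 (vecQ i1 O1 w1) (vecQ i2 O2 w2).

Section Coeffs.
Variables (a1 e1 a2 e2 K L M N : R).
Definition lam (u2 : R) : R := a1 * e1 ^+ 2.
Definition muf (u2 : R) : R :=
  a2 * sqrt (1 - e1 ^+ 2) *
  (sqrt (1 - e2 ^+ 2) * N * sin u2 + L * cos u2 - e2 * L).
Definition nuf (u2 : R) : R :=
  a2 * e2 * K - a1 * e1 - a2 * sqrt (1 - e2 ^+ 2) * M * sin u2 - a2 * K * cos u2.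
Definition alf (u2 : R) : R :=
  a1 * (sqrt (1 - e2 ^+ 2) * M * cos u2 - K * sin u2).
Definition bef (u2 : R) : R :=
  a1 * sqrt (1 - e1 ^+ 2) * (sqrt (1 - e2 ^+ 2) * N * cos u2 - L * sin u2).
Definition gaf (u2 : R) : R :=
  a2 * e2 ^+ 2 * sin u2 * cos u2 - a1 * e1 * sqrt (1 - e2 ^+ 2) * M * cos u2
  + (a1 * e1 * K - a2 * e2) * sin u2.
End Coeffs.

Definition sylv (al be ga la mu nu : R) : 'M[R]_4 :=
  \matrix_(i < 4, j < 4)
   match nat_of_ord i, nat_of_ord j with
   | 0, 0 => al ^+ 2 + be ^+ 2 | 0, 1 => 0 | 0, 2 => - (al * la) | 0, _ => 0
   | 1, 0 => 2 * al * ga | 1, 1 => al ^+ 2 + be ^+ 2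
   | 1, 2 => be * mu - la * ga - al * nu | 1, _ => - (al * la)
   | 2, 0 => ga ^+ 2 - be ^+ 2 | 2, 1 => 2 * al * ga | 2, 2 => - (ga * nu)
   | 2, _ => be * mu - la * ga - al * nu
   | _, 0 => 0 | _, 1 => ga ^+ 2 - be ^+ 2 | _, 2 => 0 | _, _ => - (ga * nu)
   end.

Definition sylvS (a1 e1 a2 e2 K L M N u2 : R) : 'M[R]_4 :=
  sylv (alf a1 e2 K M u2) (bef a1 e1 e2 L N u2) (gaf a1 e1 a2 e2 K M u2)
       (lam a1 e1 u2) (muf e1 a2 e2 L N u2) (nuf a1 e1 a2 e2 K M u2).

Definition vars6 (al be ga la mu nu : R) (k : 'I_6) : R :=
  match nat_of_ord k with
  | 0 => al | 1 => be | 2 => ga | 3 => la | 4 => mu | _ => nu end.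

(* Main.v *)
Require Import Defs.
From mathcomp Require Import all_boot all_algebra.
From mathcomp Require Import Rstruct.
From mathcomp Require Import mpoly.
From Stdlib Require Import Reals.
Local Open Scope ring_scope.

From mathcomp Require Import ring.
Import GRing.Theory.

Definition xx (k : nat) (h : is_true (leq k.+1 6)) : {mpoly R[6]} := 'X_(Ordinal h).
Definition Pq : {mpoly R[6]} :=
  let x0 := @xx 0 isT in let x1 := @xx 1 isT in let x2 := @xx 2 isT in
  let x3 := @xx 3 isT in let x4 := @xx 4 isT in let x5 := @xx 5 isT in
  0 + (x2*x2*x2*x2*x3*x3) - ((x1*x2*x2*x2*x3*x4) *+ 2) + (x1*x1*x2*x2*x5*x5) + (x1*x1*x2*x2*x4*x4) - (x1*x1*x2*x2*x3*x3) + ((x1*x1*x1*x2*x3*x4) *+ 2) - (x1*x1*x1*x1*x4*x4) - ((x0*x2*x2*x2*x3*x5) *+ 2) + ((x0*x1*x1*x1*x4*x5) *+ 2) + (x0*x0*x2*x2*x5*x5) + (x0*x0*x2*x2*x4*x4) - (x0*x0*x2*x2*x3*x3) - (x0*x0*x1*x1*x5*x5) - (x0*x0*x1*x1*x4*x4) + (x0*x0*x1*x1*x3*x3) + ((x0*x0*x0*x2*x3*x5) *+ 2) + ((x0*x0*x0*x1*x4*x5) *+ 2) - (x0*x0*x0*x0*x5*x5).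

Lemma Pq_eval al be ga la mu nu :
  Pq.@[vars6 al be ga la mu nu] = 0 + (ga*ga*ga*ga*la*la) - ((be*ga*ga*ga*la*mu) *+ 2) + (be*be*ga*ga*nu*nu) + (be*be*ga*ga*mu*mu) - (be*be*ga*ga*la*la) + ((be*be*be*ga*la*mu) *+ 2) - (be*be*be*be*mu*mu) - ((al*ga*ga*ga*la*nu) *+ 2) + ((al*be*be*be*mu*nu) *+ 2) + (al*al*ga*ga*nu*nu) + (al*al*ga*ga*mu*mu) - (al*al*ga*ga*la*la) - (al*al*be*be*nu*nu) - (al*al*be*be*mu*mu) + (al*al*be*be*la*la) + ((al*al*al*ga*la*nu) *+ 2) + ((al*al*al*be*mu*nu) *+ 2) - (al*al*al*al*nu*nu).
Proof.
rewrite /Pq /xx !(mevalD, mevalB, mevalN, mevalM, mevalMn, mevalXU, meval0) /=.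
by [].
Qed.

Lemma det_sylv al be ga la mu nu :
  \det (sylv al be ga la mu nu) = be ^+ 2 * Pq.@[vars6 al be ga la mu nu].
Proof.
rewrite Pq_eval.
rewrite !(expand_det_row _ ord0) !big_ord_recl !big_ord0 /cofactor.
rewrite !(expand_det_row _ ord0) !big_ord_recl !big_ord0 /cofactor.
rewrite !(expand_det_row _ ord0) !big_ord_recl !big_ord0 /cofactor.
rewrite !(expand_det_row _ ord0) !big_ord_recl !big_ord0 /cofactor.
rewrite !det_mx00 !mxE /=.
ring.
Qed.

Theorem mainTheorem1 (a1 a2 e1 e2 i1 i2 Om1 Om2 om1 om2 : R) :
  0 < a1 -> 0 < a2 -> 0 <= e1 < 1 -> 0 <= e2 < 1 ->
  let K := Kc i1 Om1 om1 i2 Om2 om2 in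
  let L := Lc i1 Om1 om1 i2 Om2 om2 in
  let M := Mc i1 Om1 om1 i2 Om2 om2 in
  let N := Nc i1 Om1 om1 i2 Om2 om2 in
  exists P : {mpoly R[6]}, forall u2 : R,
    \det (sylvS a1 e1 a2 e2 K L M N u2) =
    (bef a1 e1 e2 L N u2) ^+ 2 *
    P.@[vars6 (alf a1 e2 K M u2) (bef a1 e1 e2 L N u2) (gaf a1 e1 a2 e2 K M u2)
              (lam a1 e1 u2) (muf e1 a2 e2 L N u2) (nuf a1 e1 a2 e2 K M u2)].
Proof.
move=> _ _ _ _ K L M N; exists Pq => u2.
by rewrite /sylvS det_sylv.
Qed.
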